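(* Let $n\in\mathbb N$ be even and let $1_n=(1,2,\ldots,n)$. Let $$a_1(n)=\{\pi\in\mathcal P_2(n)\,:\,\#(\pi^{-1}1_n)=n/2-1\}.$$ For $1\le u<v<n$ let $\mathrm{NC}^{\rm T}_{2,u,v}(n)$ be the set of pairings $\pi\in\mathcal P_2(n)$ such that, with $\gamma=1_n\,(u-1,v)$ (where the transposition $(0,v)$ is interpreted as $(n,v)$): (i) the group $\langle\pi,\gamma\rangle$ acts transitively on $[n]$; (ii) $\#(\pi)+\#(\pi^{-1}\gamma)+\#(\gamma)=n+2$; (iii) $(u,v)$ is a cycle of $\pi$; (iv) for all $a\in\{1,\ldots,u-1\}$ (an empty condition when $u=1$), $\pi(a)\in[n]\setminus\{u,u+1,\ldots,v\}$. Let $\mathrm{NC}_2^{\rm T}(n)=\bigcup_{1\le u<v<n}\mathrm{NC}^{\rm T}_{2,u,v}(n)$. Then $a_1(n)=\mathrm{NC}_2^{\rm T}(n)$ as subsets of $\mathcal P_2(n)$.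
   Context: $[n]=\{1,\ldots,n\}$. $\mathcal P_2(n)$ is the set of pairings of $[n]$, each identified with the fixed-point-free involution of $[n]$ whose cycles are its blocks. Permutations are composed right to left, $(\sigma\rho)(x)=\sigma(\rho(x))$, and $\#(\sigma)$ denotes the number of cycles of $\sigma$, fixed points included. Note $1_n(u-1,v)=(u,\ldots,v)(1,\ldots,u-1,v+1,\ldots,n)$ has two cycles. The set $a_1(n)$ encodes the genus-one orientable ribbon graphs built from one $n$-gon. *)

(* Defs.v *)
From mathcomp Require Import all_boot all_order all_fingroup.
Set Implicit Arguments. Unset Strict Implicit. Unset Printing Implicit Defensive.

(* Convention: the point k of [n] = {1..n} is the ordinal of value k-1 in 'I_n. *)

(* paper composition (s o t)(x) = s (t x); mathcomp's s * t is "t after s" *)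
Definition pcomp n (s t : {perm 'I_n}) : {perm 'I_n} := (t * s)%g.

Definition ncycles n (s : {perm 'I_n}) : nat := #|porbits s|.

(* the long cycle 1_n = (1,2,...,n) : k |-> k+1 mod n *)
Definition one_n n : {perm 'I_n} := perm (@ordS_inj n).

Definition is_pairing n (p : {perm 'I_n}) : Prop :=
  (forall x, p (p x) = x) /\ (forall x, p x != x).

Definition a1 n (p : {perm 'I_n}) : Prop :=
  is_pairing p /\ ncycles (pcomp p^-1%g (one_n n)) + 1 = n./2.

(* NC^T_{2,u,v}(n); the point u-1 (read as n when u = 1) has index
   (if u == 1 then n-1 else u-2), the point v has index v-1. *)
Definition NCT_uv n (u v : nat) (p : {perm 'I_n}) : Prop :=
  is_pairing p /\
  exists (a b : 'I_n),
    val a = (if u == 1 then n.-1 else u - 2) /\ val b = v.-1 /\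
    let g := pcomp (one_n n) (tperm a b) in
    [transitive <<[set p; g]>>, on [set: 'I_n] | 'P] /\
    ncycles p + ncycles (pcomp p^-1%g g) + ncycles g = n + 2 /\
    (forall x : 'I_n, val x = u.-1 -> val (p x) = v.-1) /\
    (forall x : 'I_n, x.+1 <= u - 1 -> ~~ (u <= (p x).+1 <= v)).

Definition NCT n (p : {perm 'I_n}) : Prop :=
  exists u v, [/\ 1 <= u, u < v, v < n & NCT_uv u v p].

(* Main.v *)
Require Import Defs.
From mathcomp Require Import all_boot all_order all_fingroup.
From mathcomp Require Import zify.
Import Defs.
Set Implicit Arguments. Unset Strict Implicit. Unset Printing Implicit Defensive.
Ltac mlia := repeat match goal with x := _ |- _ => clearbody x end; lia.

Section Basic.
Local Notation "s ^+ k" := (expgn s k) : nat_scope.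
Variable n : nat.
Implicit Types (x y : 'I_n) (s : {perm 'I_n}).

Lemma one_nE x : val (one_n n x) = x.+1 %% n.
Proof. by rewrite /one_n permE. Qed.

Lemma one_nE' x : val (one_n n x) = if x.+1 == n then 0 else x.+1.
Proof.
rewrite one_nE; case: eqP => [->|h]; first by rewrite modnn.
by rewrite modn_small //; have := ltn_ord x; lia.
Qed.

Lemma one_nX k x : val (((one_n n ^+ k)%g) x) = (x + k) %% n.
Proof.
elim: k => [|k IH]; first by rewrite expg0 perm1 addn0 modn_small.
rewrite expgSr permM one_nE IH -[((x + k) %% n).+1]addn1 modnDml; congr (_ %% _); lia.
Qed.

Lemma porbit_one_n x y : y \in porbit (one_n n) x.
Proof.
apply/porbitP; exists (y + n - x); apply: val_inj; rewrite one_nX.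
have hx := ltn_ord x; have hy := ltn_ord y.
have -> : x + (y + n - x) = 1 * n + y by lia.
by rewrite modnMDl modn_small.
Qed.

Lemma porbits_one_n : 0 < n -> #|porbits (one_n n)| = 1.
Proof.
move=> n0; have x0 : 'I_n := Ordinal n0.
suff -> : porbits (one_n n) = [set porbit (one_n n) x0] by rewrite cards1.
apply/setP => A; rewrite inE; apply/imsetP/eqP => [[x _ ->]|->].
  by apply/setP => y; rewrite !porbit_one_n.
by exists x0.
Qed.

Lemma porbit_fix s x : s x = x -> porbit s x = [set x].
Proof.
move=> h; apply/setP => y; rewrite inE; apply/porbitP/eqP => [[i ->]|->].
  by elim: i => [|i IH]; rewrite ?expg0 ?perm1 // expgSr permM IH h.
by exists 0; rewrite expg0 perm1.
Qed.

Lemma porbits1 : #|porbits (1 : {perm 'I_n})| = n.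
Proof.
rewrite /porbits (eq_imset (g := fun x => [set x])); last first.
  by move=> x; rewrite porbit_fix ?perm1.
by rewrite card_imset ?card_ord //; apply: set1_inj.
Qed.

End Basic.


Section Pair.
Variable n : nat.
Variable p : {perm 'I_n}.
Hypothesis pI : forall x, p (p x) = x.
Hypothesis pF : forall x, p x != x.
Implicit Types (x y : 'I_n) (S : {set 'I_n}).

Definition restrf S x := if (x \in S) && (p x \in S) then p x else x.

Lemma restrf_inj S : injective (restrf S).
Proof.
move=> x y; rewrite /restrf.
case hx: ((x \in S) && (p x \in S)); case hy: ((y \in S) && (p y \in S)).
- by move/perm_inj.
- by move=> e; rewrite -e pI andbC hx in hy.
- by move=> e; rewrite e pI andbC hy in hx.
- by [].
Qed.

Definition restr S : {perm 'I_n} := perm (@restrf_inj S).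

Lemma restrE S x : restr S x = restrf S x.
Proof. by rewrite permE. Qed.

Lemma restr0 : restr set0 = 1%g.
Proof. by apply/permP => x; rewrite restrE perm1 /restrf inE. Qed.

Lemma restrT : restr setT = p.
Proof. by apply/permP => x; rewrite restrE /restrf !inE. Qed.

Definition closed S := forall x, x \in S -> p x \in S.

Lemma closedD S a : closed S -> closed (S :\ a :\ p a).
Proof.
move=> cS x; rewrite !inE => /and3P[h1 h2 h3].
rewrite cS // andbT; apply/andP; split.
  by apply: contra h2 => /eqP /perm_inj ->.
by apply: contra h1 => /eqP <-; rewrite pI.
Qed.

Lemma restr_stepl S a : a \in S -> p a \in S ->
  restr S = (tperm a (p a) * restr (S :\ a :\ p a))%g.
Proof.
move=> aS paS; apply/permP => x; rewrite permM !restrE /restrf.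
case: tpermP => [->|->|h1 h2]; rewrite ?pI !inE ?eqxx ?andbF ?andbT ?aS ?paS //.
move/eqP: h1 => h1; move/eqP: h2 => h2.
have -> : (p x != p a) by apply: contra h1 => /eqP/perm_inj ->.
have -> : (p x != a) by apply: contra h2 => /eqP <-; rewrite pI.
by rewrite h1 h2.
Qed.

Lemma restr_stepr S a : a \in S -> p a \in S ->
  restr S = (restr (S :\ a :\ p a) * tperm a (p a))%g.
Proof.
move=> aS paS; apply/permP => x; rewrite permM !restrE /restrf.
rewrite !inE.
case: (eqVneq x (p a)) => [->|h1]; first by rewrite pI eqxx /= aS paS tpermR.
case: (eqVneq x a) => [->|h2]; first by rewrite eqxx /= aS paS tpermL.
have -> : (p x != p a) by apply: contra h2 => /eqP/perm_inj ->.
have -> : (p x != a) by apply: contra h1 => /eqP <-; rewrite pI.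
rewrite /=; case: ifP => _; last by rewrite tpermD // eq_sym.
rewrite tpermD // eq_sym.
  by apply: contra h1 => /eqP <-; rewrite pI.
by apply: contra h2 => /eqP/perm_inj ->.
Qed.

Lemma card_step S a : a \in S -> p a \in S -> #|S| = (#|S :\ a :\ p a|).+2.
Proof.
move=> aS paS; rewrite (cardsD1 a S) aS (cardsD1 (p a) (S :\ a)).
by rewrite !inE paS (pF a).
Qed.

Lemma count_restr S : closed S -> 2 * #|porbits (restr S)| + #|S| = 2 * n.
Proof.
have [k] := ubnP #|S|; elim: k S => // k IH S hk cS.
case: (set_0Vmem S) => [->|[a aS]].
  by rewrite restr0 porbits1 cards0 addn0.
have paS := cS a aS.
have e := card_step aS paS.
have IH' := IH (S :\ a :\ p a) ltac:(mlia) (@closedD S a cS).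
have := porbits_mul_tperm (restr (S :\ a :\ p a)) a (p a).
rewrite /= -restr_stepl // porbit_fix; last first.
  by rewrite restrE /restrf !inE eqxx /=.
rewrite inE eq_sym (pF a) /=.
move=> /= h; move: IH' h; rewrite e -muln2; set c1 := #|porbits _|; set c2 := #|porbits _|; set c3 := #|_|; clearbody c1 c2 c3; mlia.
Qed.


Definition NC := forall a c : 'I_n, a < c -> c < p a -> p a < p c -> False.

Definition sig S := (one_n n * restr S)%g.

Lemma porbit_next (s : {perm 'I_n}) a x : x \in porbit s a -> s x \in porbit s a.
Proof.
move=> /porbitP[i ->]; rewrite -permM -expgSr; exact: mem_porbit.
Qed.

Lemma walk S a : NC -> closed S -> a \notin S -> p a \notin S -> a < p a ->
  p a \in porbit (sig S) a.
Proof.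
move=> nc cS aS paS lt_ab; set b := p a.
suff H : forall x : 'I_n, a <= x < b -> x \in porbit (sig S) a ->
   (forall z : 'I_n, a < z <= x -> z \in S -> a < p z <= x) ->
   b \in porbit (sig S) a.
  by apply: (H a); rewrite ?leqnn ?lt_ab ?porbit_id //; move=> z; mlia.
move=> x; have [k] := ubnP (b - x); elim: k x => // k IH x hk hx xO Inv.
have hb := ltn_ord b.
have hy : x.+1 < n by mlia.
pose y := Ordinal hy.
have vy : val y = x.+1 by [].
have vy' : nat_of_ord y = x.+1 by [].
have ey : one_n n x = y by apply: val_inj; rewrite one_nE' /=; case: eqP => //; mlia.
have sx : sig S x = restrf S y by rewrite /sig permM ey restrE.
have Ox := porbit_next xO; rewrite sx in Ox.
case: (eqVneq (nat_of_ord y) (nat_of_ord b)) => [eyb|nyb].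
  have eb : y = b by apply: val_inj.
  by rewrite /restrf eb (negbTE paS) /= in Ox.
case yS: (y \in S); last first.
  move: Ox; rewrite /restrf yS /= => Oy.
  apply: (IH y) => //=; first by mlia.
    by move: nyb; rewrite /=; mlia.
  move=> z hz zS; case: (eqVneq (nat_of_ord z) x.+1) => [ez|nz].
    have ezy : z = y by apply: val_inj.
    by rewrite ezy yS in zS.
  move=> {Oy}; move: (Inv z); rewrite zS => /(_ _ isT); move: hz nz; rewrite /=; mlia.
have pyS := cS y yS.
move: Ox; rewrite /restrf yS pyS /= => Ow.
set w := p y in Ow pyS.
have pw : p w = y by rewrite /w pI.
have hw1 : nat_of_ord w != nat_of_ord b.
  apply/eqP => /val_inj ew; have : p w = p b by rewrite ew.
  by rewrite pw /b pI => eya; move: hx; rewrite -eya /=; mlia.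
have hw2 : ~ (b < w).
  by move=> h; apply: (nc a y) => //=; rewrite -/b; mlia.
have hw3 : ~ (w <= a).
  move=> h; case: (eqVneq (nat_of_ord w) (nat_of_ord a)) => [/val_inj ewa|nwa].
    by move: pw; rewrite ewa -/b => eby; move: nyb; rewrite eby eqxx.
  apply: (nc w a); rewrite ?pw -/b //=; mlia.
have hw4 : ~ (w <= x).
  move=> h; have := Inv w; rewrite pyS pw /=; move=> /(_ _ isT); mlia.
have hw5 : val w != x.+1.
  apply/eqP => ew; have : w = y by apply: val_inj.
  by move=> e; move: (pF y); rewrite -/w e eqxx.
apply: (IH w) => //; first by mlia.
  by move: hw1; mlia.
move=> z hz zS.
case: (ltnP x z) => hzx; last by have := Inv z; rewrite zS => /(_ _ isT); mlia.
case: (eqVneq (nat_of_ord z) x.+1) => [ez|nz].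
  have -> : z = y by apply: val_inj.
  by rewrite -/w leqnn andbT; mlia.
case: (eqVneq z w) => [->|nzw]; first by rewrite pw /=; mlia.
have pzS := cS z zS.
have nzw' : nat_of_ord z != nat_of_ord w by apply: contra nzw => /eqP/val_inj ->.
have hzw : z < w by move: nzw'; mlia.
apply/andP; split.
  rewrite ltnNge; apply/negP => h.
  case: (eqVneq (nat_of_ord (p z)) (nat_of_ord a)) => [/val_inj epa|npa].
    have : p (p z) = p a by rewrite epa.
    by rewrite pI -/b => ezb; move: hzw; rewrite ezb; mlia.
  apply: (nc (p z) a); rewrite ?pI -/b //=; mlia.
rewrite leqNgt; apply/negP => h.
apply: (nc y z); rewrite -/w //=; mlia.
Qed.

Lemma count_sig S : 0 < n -> NC -> closed S -> #|porbits (sig S)| * 2 = 2 + #|S|.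
Proof.
move=> n0 nc; have [k] := ubnP #|S|; elim: k S => // k IH S hk cS.
case: (set_0Vmem S) => [->|[a aS]].
  by rewrite /sig restr0 mulg1 porbits_one_n // cards0.
have paS := cS a aS.
have e := card_step aS paS.
set S' := S :\ a :\ p a.
have cS' : closed S' := @closedD S a cS.
have IH' := IH S' ltac:(rewrite /S'; mlia) cS'.
have aS' : a \notin S' by rewrite !inE eqxx andbF.
have paS' : p a \notin S' by rewrite !inE eqxx.
have mem : a \in porbit (sig S') (p a).
  have := pF a; rewrite neq_ltn => /orP[h|h].
    by have := @walk S' (p a) nc cS' paS' ltac:(by rewrite pI) ltac:(by rewrite pI); rewrite pI.
  by rewrite porbit_sym; apply: (@walk S' a nc cS' aS' paS' h).
have := porbits_mul_tperm (sig S')^-1 a (p a).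
rewrite /= porbitV porbitsV mem /= -tpermV -invMg porbitsV eq_sym (pF a) /sig -mulgA -restr_stepr //.
move: IH'; rewrite e -/S'.
set c1 := #|porbits _|; set c2 := #|porbits _|; set c3 := #|_|; clearbody c1 c2 c3.
move=> ? ?; lia.
Qed.

End Pair.


Section Main.
Variable n : nat.
Variable p : {perm 'I_n}.
Hypothesis pI : forall x, p (p x) = x.
Hypothesis pF : forall x, p x != x.

Lemma pinv : (p^-1)%g = p.
Proof. by apply/permP => x; apply: (@perm_inj _ p); rewrite permKV pI. Qed.

Lemma ncycles_p : ~~ odd n -> ncycles p = n./2.
Proof.
move=> ev; have := count_restr pI pF (S := setT) ltac:(by move=> x; rewrite inE).
rewrite restrT cardsT card_ord /ncycles.
have := odd_double_half n; rewrite (negbTE ev) add0n -muln2.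
set c := #|porbits p|; clearbody c; lia.
Qed.

Lemma key a b x : one_n n a = x -> p x = b -> a != b ->
  ncycles (pcomp p^-1%g (pcomp (one_n n) (tperm a b))) =
  ncycles (pcomp p^-1%g (one_n n)) + 1.
Proof.
move=> ea eb nab; rewrite /ncycles /pcomp -mulgA.
have := porbits_mul_tperm (one_n n * p^-1)%g a b; rewrite /= nab.
have -> : a \in porbit (one_n n * p^-1)%g b.
  rewrite porbit_sym; have := mem_porbit (one_n n * p^-1)%g 1 a.
  by rewrite expg1 permM ea pinv eb.
by rewrite /= addn0.
Qed.

Lemma ncycles_g a b : 0 < n -> a != b -> ncycles (pcomp (one_n n) (tperm a b)) = 2.
Proof.
move=> n0 nab; rewrite /ncycles /pcomp.
have := porbits_mul_tperm (one_n n) a b; rewrite /= nab porbit_one_n porbits_one_n //.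
by rewrite /= addn0.
Qed.

End Main.

Lemma up_lemma n (O : {set 'I_n}) (f : 'I_n -> 'I_n) (m M : nat) :
  (forall y, y \in O -> f y \in O) ->
  (forall x : 'I_n, m <= x < M -> nat_of_ord (f x) = x.+1) ->
  (exists2 x0, x0 \in O & nat_of_ord x0 = m) ->
  forall x : 'I_n, m <= x <= M -> x \in O.
Proof.
move=> cO hf [x0 x0O ex0] x hx.
have : x - m <= M - m by lia.
have : nat_of_ord x = m + (x - m) by lia.
move: (x - m) => k; elim: k x {hx} => [|k IH] x ex hk.
  by have -> : x = x0 by apply: val_inj => /=; lia.
have hx' : m + k < n by have := ltn_ord x; lia.
have := hf (Ordinal hx') ltac:(rewrite /=; lia).
have -> : (Ordinal hx').+1 = nat_of_ord x by rewrite /=; lia.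
move=> /val_inj <-; apply: cO; apply: IH => //=; lia.
Qed.

Theorem proposition6 (n : nat) : ~~ odd n ->
  forall p : {perm 'I_n}, a1 p <-> NCT p.
Proof.
move=> ev p; split.
- move=> [[pI pF] ha].
  have hev : n./2 * 2 = n by have := odd_double_half n; rewrite (negbTE ev) add0n -muln2.
  have n0 : 0 < n by move: ha hev; set c := ncycles _; clearbody c; lia.
  case E: [exists a : 'I_n, exists c : 'I_n, (a < c) && (c < p a) && (p a < p c)]; last first.
    have nc : NC p.
      move=> a c h1 h2 h3; move/negbT: E => /existsPn /(_ a) /existsPn /(_ c).
      by rewrite h1 h2 h3.
    have := count_sig pI pF n0 nc (S := setT) ltac:(by move=> x; rewrite inE).
    move: ha; rewrite /sig restrT cardsT card_ord /ncycles /pcomp (pinv pI).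
    set c := #|porbits _|; clearbody c; lia.
  move/existsP: E => [a0 /existsP [c0 /andP[/andP[h01 h02] h03]]].
  pose rc := fun x : 'I_n => (x < p x) && [exists c : 'I_n, (x < c) && (c < p x) && (p x < p c)].
  have rca0 : rc a0.
    by rewrite /rc; apply/andP; split; [lia|apply/existsP; exists c0; rewrite h01 h02 h03].
  case: (@arg_minnP _ a0 rc (fun x => nat_of_ord x) rca0) => u0 rcu0 minu0.
  move: (rcu0); rewrite /rc => /andP[uv0 /existsP[c /andP[/andP[h1 h2] h3]]].
  have hd := ltn_ord (p c).
  exists u0.+1, (p u0).+1; split => //; first lia.
  split; first by [].
  have ha' : (if u0.+1 == 1 then n.-1 else u0.+1 - 2) < n by case: ifP => _; lia.
  pose a := Ordinal ha'.
  have va : nat_of_ord a = (if nat_of_ord u0 == 0 then n.-1 else u0 - 1).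
    by rewrite /a /=; case: (nat_of_ord u0) => //= k; rewrite subSS subn0.
  exists a, (p u0); split; first by [].
  split; first by [].
  have e1 : one_n n a = u0.
    apply: val_inj; rewrite one_nE' va /=; case: (eqVneq (nat_of_ord u0) 0) => [e0|n0'].
      by rewrite e0; case: eqP => //; lia.
    by case: eqP; lia.
  have nab : a != p u0.
    apply/negP => /eqP/(congr1 val) => /=; rewrite -/(nat_of_ord a) va.
    case: (nat_of_ord u0 == 0); lia.
  have gE : forall y, pcomp (one_n n) (tperm a (p u0)) y = one_n n (tperm a (p u0) y).
    by move=> y; rewrite /pcomp permM.
  split; last split; last split.
  + have hpu := ltn_ord (p u0).
    clear ha hev rca0 h01 h02 h03 minu0 rcu0 ev.
    set g := pcomp (one_n n) (tperm a (p u0)).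
    set G := (<<[set p; g]>>)%g.
    set O := orbit 'P G u0.
    have pG : p \in G by apply: mem_gen; rewrite !inE eqxx.
    have gG : g \in G by apply: mem_gen; rewrite !inE eqxx orbT.
    have cO : forall h y, h \in G -> y \in O -> h y \in O.
      move=> h y hG yO; apply: (orbit_trans (y:=y)) => //.
      by apply/orbitP; exists h.
    have u0O : u0 \in O by apply/orbitP; exists 1%g; rewrite ?group1 //= apermE perm1.
    have gstep : forall y : 'I_n, nat_of_ord y != a -> nat_of_ord y != p u0 -> y.+1 < n ->
        nat_of_ord (g y) = y.+1.
      move=> y ya yb yn; rewrite /g gE tpermD; last 2 first.
          by apply: contra ya => /eqP <-.
        by apply: contra yb => /eqP <-.
      by rewrite one_nE'; case: eqP => //; (clearbody O G g a rc; lia).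
    have hn1 : n.-1 < n by (clearbody O G g a rc; lia).
    have inner : forall y : 'I_n, u0 <= y <= p u0 -> y \in O.
      apply: (up_lemma (f := g)) => [y|y hy|]; first by apply: cO.
        by apply: gstep; rewrite ?va; [case: ifP => /eqP h0; (clearbody O G g a rc; lia)|(clearbody O G g a rc; lia)|(clearbody O G g a rc; lia)].
      by exists u0.
    have cdO : p c \in O by apply: cO => //; apply: inner; (clearbody O G g a rc; lia).
    have upper : forall y : 'I_n, p c <= y <= n.-1 -> y \in O.
      apply: (up_lemma (f := g)) => [y|y hy|]; first by apply: cO.
        by apply: gstep; rewrite ?va; [case: ifP => /eqP h0; (clearbody O G g a rc; lia)|(clearbody O G g a rc; lia)|(clearbody O G g a rc; lia)].
      by exists (p c).
    have low : forall y : 'I_n, y < u0 -> y \in O.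
      move=> y hy.
      have n1O : Ordinal hn1 \in O by apply: upper => /=; (clearbody O G g a rc; lia).
      have g0 := gstep (Ordinal hn1).
      have zO := cO g _ gG n1O.
      apply: (up_lemma (f := g) (m := 0) (M := u0.-1)) => [z|z hz| |]; first by apply: cO.
          by apply: gstep; rewrite ?va; [case: ifP => /eqP h0; (clearbody O G g a rc; lia)|(clearbody O G g a rc; lia)|(clearbody O G g a rc; lia)].
        exists (g (Ordinal hn1)) => //.
        rewrite /g gE tpermD; first by rewrite one_nE' /=; case: eqP => //; (clearbody O G g a rc; lia).
          by apply/negP => /eqP/(congr1 val) /=; rewrite -/(nat_of_ord a) va; case: eqP; (clearbody O G g a rc; lia).
        by apply/negP => /eqP/(congr1 val) /=; (clearbody O G g a rc; lia).
      (clearbody O G g a rc; lia).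
    have aO : a \in O.
      case: (eqVneq (nat_of_ord u0) 0) => [e0|ne0].
        by apply: upper; rewrite va e0 /=; (clearbody O G g a rc; lia).
      by apply: low; rewrite va (negbTE ne0); (clearbody O G g a rc; lia).
    have mid : forall y : 'I_n, (p u0).+1 <= y <= p c -> y \in O.
      apply: (up_lemma (f := g)) => [y|y hy|]; first by apply: cO.
        by apply: gstep; rewrite ?va; [case: ifP => /eqP h0; (clearbody O G g a rc; lia)|(clearbody O G g a rc; lia)|(clearbody O G g a rc; lia)].
      exists (g a); first by apply: cO.
      by rewrite /g gE tpermL one_nE'; case: eqP; (clearbody O G g a rc; lia).
    have OT : O = setT.
      apply/setP => y; rewrite inE.
      have := ltn_ord y.
      case: (ltnP y u0) => h; first by rewrite low.
      case: (leqP y (p u0)) => h'; first by rewrite inner // h h'.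
      case: (leqP y (p c)) => h''; first by rewrite mid // h' h''.
      by move=> hy; rewrite upper //; (clearbody O G g a rc; lia).
    by apply/imsetP; exists u0; rewrite ?inE // OT.
  + rewrite (key pI e1 erefl nab) (ncycles_g (n:=n) _ nab) ?(ncycles_p pI pF ev) //.
    move: ha hev; set c' := ncycles _; clearbody c'; lia.
  + by move=> x /= hx; have -> : x = u0 by apply: val_inj.
  + move=> x hx; apply/negP => /andP[h4 h5].
    case: (eqVneq (p x) u0) => [ex|nx1].
      by move: (congr1 p ex); rewrite pI => ex'; move: hx; rewrite ex'; lia.
    case: (eqVneq (p x) (p u0)) => [/perm_inj ex|nx2].
      by move: hx; rewrite ex; lia.
    have nx1' : nat_of_ord (p x) != u0 by apply: contra nx1 => /eqP/val_inj ->.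
    have nx2' : nat_of_ord (p x) != p u0 by apply: contra nx2 => /eqP/val_inj ->.
    have : rc x.
      rewrite /rc; apply/andP; split; first by lia.
      by apply/existsP; exists u0; apply/andP; split; first (apply/andP; split); lia.
    by move/minu0; lia.
- move=> [u [v [u1 uv vn [[pI pF] [a [b [ea [eb [tr [gen [iii iv]]]]]]]]]]].
  split; first by [].
  have hx : u.-1 < n by lia.
  pose x := Ordinal hx.
  have e1 : one_n n a = x.
    apply: val_inj; rewrite one_nE' ea /=; case: (eqVneq u 1) => [->|hu] /=.
      by case: eqP => //; lia.
    by case: eqP; lia.
  have e2 : p x = b by apply: val_inj; rewrite eb; apply: iii.
  have nab : a != b.
    apply/negP => /eqP/(congr1 val); rewrite ea eb; case: (u == 1); lia.
  move: gen; rewrite (key pI e1 e2 nab) (ncycles_g (n:=n) _ nab) ?(ncycles_p pI pF ev); last by lia.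
  have := odd_double_half n; rewrite (negbTE ev) add0n -muln2.
  set c := ncycles _; clearbody c; lia.
Qed.
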